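(* Let $X$ be a quasi-Banach space and $f=(a_n)_{n=1}^\infty\in\mathbb{F}^{\mathbb{N}}$. Then $f\in\mathscr{G}_b(X)$ if and only if the series $\sum_{n=1}^\infty a_nx_n$ converges in $X$ for every bounded sequence $(x_n)_{n=1}^\infty$ in $X$.
   Context: For $g=(b_n)\in[0,\infty]^{\mathbb{N}}$ define $\lambda_X(g)=\sup\{\|\sum_{n=1}^Nb_nx_n\|:N\in\mathbb{N},\ \|x_n\|\le1\}$ if all $b_n<\infty$, and $\lambda_X(g)=\infty$ otherwise. The galb of $X$ is $\mathscr{G}(X)=\{(a_n)\in\mathbb{F}^{\mathbb{N}}:\lambda_X((|a_n|)_n)<\infty\}$, quasi-normed by $(a_n)\mapsto\lambda_X((|a_n|)_n)$, and $\mathscr{G}_b(X)$ is the closure in $\mathscr{G}(X)$ of the finitely supported sequences. *)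

(* Defs.v *)
From HB Require Import structures.
From mathcomp Require Import all_boot all_order all_algebra complex.
From mathcomp Require Import all_classical all_reals ereal.
Set Implicit Arguments. Unset Strict Implicit. Unset Printing Implicit Defensive.
Import Order.TTheory GRing.Theory Num.Theory.
Local Open Scope ring_scope.
Local Open Scope classical_set_scope.

(* Generic setting: scalar field F, real numbers R, the embedding emb : R -> F
   of real scalars and the modulus absF : F -> R.  The theorem instantiates
   this with F = R (emb = id, absF = |.|) and F = R[i] (emb = r |-> r%:C,
   absF = complex modulus). Sequences are indexed by nat (n = 0,1,2,...)
   instead of n = 1,2,... *)
Section Galb.
Variables (R : realType) (F : numFieldType) (emb : R -> F) (absF : F -> R).
Variables (X : lmodType F) (q : X -> R).

Definition quasi_norm : Prop :=
  [/\ forall x, 0 <= q x,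
      forall x, q x = 0 -> x = 0,
      forall (a : F) x, q (a *: x) = absF a * q x
    & exists kappa : R, 1 <= kappa /\
        forall x y, q (x + y) <= kappa * (q x + q y)].

Definition qcauchy (u : nat -> X) : Prop :=
  forall e : R, 0 < e -> exists N : nat, forall m n : nat,
    (N <= m)%N -> (N <= n)%N -> q (u m - u n) < e.

Definition qconverges_to (u : nat -> X) (l : X) : Prop :=
  forall e : R, 0 < e -> exists N : nat, forall n : nat,
    (N <= n)%N -> q (u n - l) < e.

Definition quasi_banach : Prop :=
  quasi_norm /\ forall u : nat -> X, qcauchy u -> exists l, qconverges_to u l.

Definition series_converges (u : nat -> X) : Prop :=
  exists l : X, qconverges_to (fun N => \sum_(n < N) u n) l.

Definition qbounded (x : nat -> X) : Prop :=
  exists M : R, forall n, q (x n) <= M.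

Definition lambdaX (b : nat -> R) : \bar R :=
  ereal_sup [set r : \bar R | exists (N : nat) (x : nat -> X),
     (forall n, q (x n) <= 1) /\ r = (q (\sum_(n < N) emb (b n) *: x n))%:E].

Definition in_galb (f : nat -> F) : Prop :=
  (lambdaX (fun n => absF (f n)) < +oo)%E.

Definition fin_supp (g : nat -> F) : Prop :=
  exists N : nat, forall n, (N <= n)%N -> g n = 0.

Definition in_galb_b (f : nat -> F) : Prop :=
  in_galb f /\
  forall e : R, 0 < e -> exists g : nat -> F,
    fin_supp g /\ in_galb g /\
    (lambdaX (fun n => absF (f n - g n)) < e%:E)%E.

Definition lemma4p9_prop : Prop :=
  quasi_banach ->
  forall f : nat -> F,
    in_galb_b f <->
    (forall x : nat -> X, qbounded x ->
       series_converges (fun n => f n *: x n)).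
End Galb.

Definition realC (R : realType) (r : R) : R[i] := (r%:C)%C.
Definition modC (R : realType) (z : R[i]) : R := Normc.normc z.

(* Main.v *)
Require Import Defs.
From HB Require Import structures.
From mathcomp Require Import all_boot all_order all_algebra complex.
From mathcomp Require Import all_classical all_reals ereal.
From mathcomp Require Import ring lra.
Set Implicit Arguments. Unset Strict Implicit. Unset Printing Implicit Defensive.
Import Order.TTheory GRing.Theory Num.Theory.
Local Open Scope ring_scope.
Local Open Scope classical_set_scope.

Lemma sum_diff (V : zmodType) (v : nat -> V) (m n : nat) : (m <= n)%N ->
  \sum_(k < n) v k - \sum_(k < m) v k = \sum_(k < n) (if (m <= k)%N then v k else 0).
Proof.
elim: n => [|n IH].
  rewrite leqn0 => /eqP ->; by rewrite big_ord0 subrr.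
rewrite leq_eqVlt => /orP[/eqP <-|].
  rewrite subrr big1 // => i _; by rewrite leqNgt ltn_ord.
rewrite ltnS => hm; rewrite !big_ord_recr /= -(IH hm) hm.
by rewrite addrAC.
Qed.

Lemma sum_mono (R : numDomainType) (t : nat -> R) (m N : nat) :
  (forall k, 0 <= t k) -> (m <= N)%N -> \sum_(k < m) t k <= \sum_(k < N) t k.
Proof.
move=> t0 /subnKC <-; elim: (N - m)%N => [|d IH]; first by rewrite addn0.
by rewrite addnS big_ord_recr /= (le_trans IH) // lerDl.
Qed.

Lemma sum_cut (R : numDomainType) (t : nat -> R) (n N : nat) :
  (forall k, 0 <= t k) ->
  \sum_(k < n) (if (k < N)%N then t k else 0) <= \sum_(k < N) t k.
Proof.
move=> t0.
have -> : \sum_(k < n) (if (k < N)%N then t k else 0) = \sum_(k < minn n N) t k.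
  elim: n => [|n IH]; first by rewrite min0n !big_ord0.
  rewrite big_ord_recr /= IH; case: (ltnP n N) => hn.
    have -> : minn n.+1 N = n.+1 by apply/minn_idPl.
    by rewrite big_ord_recr.
  have -> : minn n.+1 N = N by apply/minn_idPr/(leq_trans hn).
  by rewrite addr0.
by apply: sum_mono => //; exact: geq_minr.
Qed.

Fixpoint startf (M : nat -> nat) (k : nat) : nat :=
  match k with
  | 0 => 0
  | k'.+1 => if k'.+1 == M (startf M k') then k'.+1 else startf M k'
  end.

Section Start.
Variable M : nat -> nat.
Hypothesis hM : forall s, (s < M s)%N.

Lemma st_fix k : startf M (startf M k) = startf M k.
Proof.
elim: k => [|k IH] //=; case: ifP => [/eqP h|_] //=.
by rewrite -h eqxx.
Qed.

Lemma st_inv k : (startf M k <= k)%N && (k < M (startf M k))%N.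
Proof.
elim: k => [|k IH] /=; first by rewrite hM.
case/andP: IH => h1 h2; case: ifP => [/eqP h|h]; first by rewrite leqnn hM.
rewrite (leq_trans h1) //= ltn_neqAle h2 andbT.
by rewrite h.
Qed.

Lemma st_block s : startf M s = s -> forall k, (s <= k)%N -> (k < M s)%N -> startf M k = s.
Proof.
move=> hs; elim=> [|k IH]; first by rewrite leqn0 => /eqP <-.
rewrite leq_eqVlt => /orP[/eqP <- //|]; rewrite ltnS => hk hkM.
rewrite /= IH // ?(ltnW hkM) //; case: ifP => // /eqP h.
by rewrite h ltnn in hkM.
Qed.

Lemma st_next s : startf M s = s -> startf M (M s) = M s.
Proof.
move=> hs; have := hM s; case hMs: (M s) => [//|k] hk.
have hb : startf M k = s by apply: st_block => //; rewrite hMs.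
by rewrite /= hb hMs eqxx.
Qed.

Lemma st_unb n : exists s, (n <= s)%N /\ startf M s = s.
Proof.
exists (M (startf M n)); split.
  by case/andP: (st_inv n) => _ /ltnW.
by apply: st_next; apply: st_fix.
Qed.
End Start.
Section Gen.
Variables (R : realType) (F : numFieldType) (emb : R -> F) (absF : F -> R).
Hypothesis absF_ge0 : forall a, 0 <= absF a.
Hypothesis absF_emb : forall r, 0 <= r -> absF (emb r) = r.
Hypothesis absFM : forall a b, absF (a * b) = absF a * absF b.
Hypothesis embM : forall r s, emb (r * s) = emb r * emb s.
Hypothesis emb1 : emb 1 = 1.
Hypothesis emb0 : emb 0 = 0.
Hypothesis absF0 : absF 0 = 0.
Hypothesis absFN1 : absF (-1) = 1.
Hypothesis phase1 : forall a, exists v, absF v = 1 /\ a * v = emb (absF a).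
Hypothesis phase2 : forall a, exists u, absF u = 1 /\ a = emb (absF a) * u.
Variables (X : lmodType F) (q : X -> R).
Hypothesis q_ge0 : forall x, 0 <= q x.
Hypothesis qZ : forall (a : F) x, q (a *: x) = absF a * q x.
Variable kappa : R.
Hypothesis kappa1 : 1 <= kappa.
Hypothesis qD : forall x y, q (x + y) <= kappa * (q x + q y).

Lemma q0 : q 0 = 0.
Proof. by rewrite -(scale0r (0 : X)) qZ absF0 mul0r. Qed.

Lemma qN x : q (- x) = q x.
Proof. by rewrite -scaleN1r qZ absFN1 mul1r. Qed.

Lemma lam_le (b : nat -> R) (C : R) :
  (forall N (x : nat -> X), (forall n, q (x n) <= 1) ->
     q (\sum_(n < N) emb (b n) *: x n) <= C) -> (lambdaX emb q b <= C%:E)%E.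
Proof.
move=> H; apply: ge_ereal_sup => _ [N [x [Hx ->]]].
by rewrite lee_fin; exact: H.
Qed.

Lemma lam_lt (b : nat -> R) (c : R) : (lambdaX emb q b < c%:E)%E ->
  forall N (x : nat -> X), (forall n, q (x n) <= 1) ->
     q (\sum_(n < N) emb (b n) *: x n) < c.
Proof.
move=> H N x Hx; rewrite -lte_fin; apply: le_lt_trans H.
by apply: ereal_sup_ubound; exists N, x.
Qed.

Lemma lam_gt (b : nat -> R) (c : R) : (c%:E < lambdaX emb q b)%E ->
  exists N (x : nat -> X), (forall n, q (x n) <= 1) /\
     c < q (\sum_(n < N) emb (b n) *: x n).
Proof.
move=> /ereal_sup_gt [_ [N [x [Hx ->]]]]; rewrite lte_fin => H.
by exists N, x.
Qed.

Lemma q_sum (w : nat -> X) n :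
  q (\sum_(k < n) w k) <= \sum_(k < n) kappa ^+ k.+1 * q (w k).
Proof.
elim: n w => [|n IH] w; first by rewrite !big_ord0 q0.
rewrite !big_ord_recl /=; apply: (le_trans (qD _ _)).
rewrite mulrDr expr1; apply: lerD => //.
rewrite (le_trans (ler_wpM2l _ (IH (fun k => w k.+1)))) //.
  by apply: le_trans kappa1.
rewrite mulr_sumr; apply: ler_sum => i _; by rewrite /bump /= add1n mulrA -exprS.
Qed.


Hypothesis complete : forall u, qcauchy q u -> exists l, qconverges_to q u l.

Lemma dir1 (f : nat -> F) : in_galb_b emb absF q f ->
  forall x, qbounded q x -> series_converges q (fun n => f n *: x n).
Proof.
move=> [_ Hb] x [M HM]; apply: complete => e e0.
set M' := Num.max M 1.
have M'0 : 0 < M' by apply: (@lt_le_trans _ _ 1) => //; rewrite le_max lexx orbT.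
have MM' : M <= M' by rewrite le_max lexx.
have [g [[N0 HN0] [_ Hg]]] := Hb (e / M') (divr_gt0 e0 M'0).
have [u Hu] := choice (fun k => phase2 (f k)).
have core : forall m n, (N0 <= n)%N -> (n <= m)%N ->
    q (\sum_(k < m) f k *: x k - \sum_(k < n) f k *: x k) < e.
  move=> m n hn hnm; rewrite (sum_diff (fun k => f k *: x k)) //.
  pose y := fun k => if (n <= k)%N then (emb M'^-1 * u k) *: x k else 0.
  have Hy : forall k, q (y k) <= 1.
    move=> k; rewrite /y; case: ifP => _; last by rewrite q0.
    rewrite qZ absFM (proj1 (Hu k)) mulr1 absF_emb ?invr_ge0 ?(ltW M'0) //.
    rewrite ler_pdivrMl // mulr1; exact: le_trans (HM k) MM'.
  have -> : \sum_(k < m) (if (n <= k)%N then f k *: x k else 0) =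
      emb M' *: \sum_(k < m) emb (absF (f k - g k)) *: y k.
    rewrite scaler_sumr; apply: eq_bigr => k _; rewrite /y; case: ifP => hk; last by rewrite !scaler0.
    rewrite HN0 ?(leq_trans hn hk) // subr0 !scalerA; congr (_ *: _).
    rewrite (mulrC (emb M')) -mulrA (mulrA (emb M')) -embM divff ?gt_eqF // emb1 mul1r.
    exact: (proj2 (Hu k)).
  rewrite qZ absF_emb ?(ltW M'0) //.
  have := lam_lt Hg m Hy; rewrite ltr_pdivlMr // mulrC; exact.
exists N0 => m n hm hn; case: (leqP n m) => h; first exact: core.
rewrite -opprB qN; apply: core => //; exact: ltnW.
Qed.


Definition hd (f : nat -> F) N n := if (n < N)%N then f n else 0.

Lemma tails f (H : forall x, qbounded q x -> series_converges q (fun n => f n *: x n)) :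
  forall e, 0 < e -> exists N, (lambdaX emb q (fun n => absF (f n - hd f N n)) < e%:E)%E.
Proof.
move=> e e0; apply: contrapT => /forallNP Hn.
have W : forall N, exists p : (nat * (nat -> X))%type, (forall n, q (p.2 n) <= 1) /\
    e / 2 < q (\sum_(n < p.1) emb (absF (f n - hd f N n)) *: p.2 n).
  move=> N; have : ((e / 2)%:E < lambdaX emb q (fun n => absF (f n - hd f N n)))%E.
    apply: (@lt_le_trans _ _ e%:E); first by rewrite lte_fin; lra.
    by rewrite leNgt; apply/negP; exact: Hn N.
  by move=> /lam_gt [N' [x [Hx Hlt]]]; exists (N', x).
have [W' HW] := choice W.
pose M N := (W' N).1; pose xs N := (W' N).2.
have hM : forall N, (N < M N)%N.
  move=> N; rewrite ltnNge; apply/negP => hle; have [_ h] := HW N.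
  move: h; rewrite big1 ?q0 => [|i _]; first by lra.
  by rewrite /hd (leq_trans (ltn_ord i) hle) subrr absF0 emb0 scale0r.
have [v Hv] := choice (fun k => phase1 (f k)).
pose x k := v k *: xs (startf M k) k.
have Hx : qbounded q x.
  by exists 1 => k; rewrite qZ (proj1 (Hv k)) mul1r; exact: (proj1 (HW _)) k.
have [l Hl] := H x Hx.
have k0 : 0 < kappa := lt_le_trans ltr01 kappa1.
have pos : 0 < e / (4 * kappa).
  by apply: divr_gt0 => //; rewrite mulr_gt0.
have [N0 HN0] := Hl _ pos.
have [s [hs1 hs2]] := st_unb hM N0.
have hlt : q (\sum_(k < M s) f k *: x k - \sum_(k < s) f k *: x k) < e / 2.
  have -> : \sum_(k < M s) f k *: x k - \sum_(k < s) f k *: x k =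
     (\sum_(k < M s) f k *: x k - l) + - (\sum_(k < s) f k *: x k - l).
    by rewrite opprB addrA subrK.
  apply: le_lt_trans (qD _ _) _; rewrite qN.
  have h1 := HN0 (M s) (leq_trans hs1 (ltnW (hM s))).
  have h2 := HN0 s hs1.
  have -> : e / 2 = kappa * (e / (4 * kappa) + e / (4 * kappa)) by field; lra.
  by rewrite ltr_pM2l //; apply: ltrD.
move: hlt; rewrite (sum_diff (fun k => f k *: x k)) ?(ltnW (hM s)) //.
have -> : \sum_(k < M s) (if (s <= k)%N then f k *: x k else 0) =
    \sum_(n < (W' s).1) emb (absF (f n - hd f s n)) *: (W' s).2 n.
  apply: eq_bigr => k _; rewrite /hd; case: (leqP s k) => hk.
    rewrite /= subr0 /x (st_block hs2 hk (ltn_ord k)) scalerA.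
    by rewrite (proj2 (Hv k)).
  by rewrite subrr absF0 emb0 scale0r.
by have [_ h] := HW s; lra.
Qed.

Lemma dir2 f : (forall x, qbounded q x -> series_converges q (fun n => f n *: x n)) ->
  in_galb_b emb absF q f.
Proof.
move=> H.
pose C N := \sum_(k < N) kappa ^+ k.+1 * absF (f k).
have k0 : 0 <= kappa := le_trans ler01 kappa1.
have hdb : forall N N' (x : nat -> X), (forall n, q (x n) <= 1) ->
    q (\sum_(n < N') emb (absF (hd f N n)) *: x n) <= C N.
  move=> N N' x Hx; apply: le_trans (q_sum (fun n => emb (absF (hd f N n)) *: x n) N') _.
  have t0 : forall k, 0 <= kappa ^+ k.+1 * absF (f k).
    by move=> k; apply: mulr_ge0 => //; apply: exprn_ge0.
  apply: le_trans (@sum_cut _ (fun k => kappa ^+ k.+1 * absF (f k)) N' N t0).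
  apply: ler_sum => k _; rewrite /hd; case: ifP => _; last first.
    by rewrite absF0 emb0 scale0r q0 mulr0.
  rewrite qZ absF_emb //; apply: ler_wpM2l; first exact: exprn_ge0.
  by rewrite -[leRHS]mulr1; apply: ler_wpM2l.
split.
  have [N HN] := tails H ltr01.
  apply: (le_lt_trans (lam_le (C := kappa * (C N + 1)) _)); last exact: ltry.
  move=> N' x Hx.
  have -> : \sum_(n < N') emb (absF (f n)) *: x n =
      \sum_(n < N') emb (absF (hd f N n)) *: x n +
      \sum_(n < N') emb (absF (f n - hd f N n)) *: x n.
    rewrite -big_split; apply: eq_bigr => k _ /=; rewrite /hd; case: ifP => _.
      by rewrite subrr absF0 emb0 scale0r addr0.
    by rewrite subr0 absF0 emb0 scale0r add0r.
  apply: le_trans (qD _ _) _; apply: ler_wpM2l => //; apply: lerD; first exact: hdb.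
  exact: ltW (lam_lt HN N' Hx).
move=> e e0; have [N HN] := tails H e0; exists (hd f N); split.
  by exists N => n hn; rewrite /hd ltnNge hn.
split => //; apply: (le_lt_trans (lam_le (C := C N) _)); last exact: ltry.
by move=> N' x Hx; apply: hdb.
Qed.

End Gen.
Local Close Scope classical_set_scope.

Lemma genP (R : realType) (F : numFieldType) (emb : R -> F) (absF : F -> R)
 (absF_ge0 : forall a, 0 <= absF a)
 (absF_emb : forall r, 0 <= r -> absF (emb r) = r)
 (absFM : forall a b, absF (a * b) = absF a * absF b)
 (embM : forall r s, emb (r * s) = emb r * emb s)
 (emb1 : emb 1 = 1) (emb0 : emb 0 = 0) (absF0 : absF 0 = 0) (absFN1 : absF (-1) = 1)
 (phase1 : forall a, exists v, absF v = 1 /\ a * v = emb (absF a))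
 (phase2 : forall a, exists u, absF u = 1 /\ a = emb (absF a) * u)
 (X : lmodType F) (q : X -> R) : lemma4p9_prop emb absF q.
Proof.
move=> [[qge qz qZ [k [k1 kD]]] comp] f; split.
  by apply: dir1.
by apply: dir2; eassumption.
Qed.

Lemma realC_norm (R : realType) (z : R[i]) : realC (modC z) = `|z|.
Proof. by []. Qed.

Unset Implicit Arguments.

Theorem lemma4p9 (R : realType) :
  (forall (X : lmodType R) (q : X -> R),
     lemma4p9_prop (fun r : R => r) (fun a : R => `|a|) q) /\
  (forall (X : lmodType R[i]) (q : X -> R),
     lemma4p9_prop (@realC R) (@modC R) q).
Proof.
split=> X q.
  apply: genP => //.
  - by move=> r r0; rewrite ger0_norm.
  - by move=> a b; rewrite normrM.
  - by rewrite normr0.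
  - by rewrite normrN1.
  - move=> a; case: (lerP 0 a) => ha.
      by exists 1; rewrite normr1 mulr1 ger0_norm.
    by exists (-1); rewrite normrN1 mulrN1 ltr0_norm.
  - move=> a; case: (lerP 0 a) => ha.
      by exists 1; rewrite normr1 mulr1 ger0_norm.
    by exists (-1); rewrite normrN1 mulrN1 ltr0_norm // opprK.
have inj : forall r s : R, realC r = realC s -> r = s by move=> r s [].
apply: genP.
- by case=> a b; rewrite /modC /=; apply: sqrtr_ge0.
- move=> r r0; apply: inj; rewrite realC_norm ger0_norm //.
  by rewrite /realC lecR.
- by move=> a b; rewrite /modC Normc.normcM.
- by move=> r s; rewrite /realC rmorphM.
- by rewrite /realC rmorph1.
- by rewrite /realC rmorph0.
- by rewrite /modC Normc.normc0.
- by apply: inj; rewrite realC_norm normrN1.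
- move=> a; have [->|a0] := eqVneq a 0.
    by exists 1; split; [apply: inj; rewrite realC_norm normr1 | rewrite mul0r realC_norm normr0].
  have na0 : `|a| != 0 by rewrite normr_eq0.
  exists (a^*%C / `|a|); split.
    by apply: inj; rewrite realC_norm normrM normfV normcJ normr_id divff.
  by rewrite realC_norm mulrA -sqr_normc expr2 mulrK.
- move=> a; have [->|a0] := eqVneq a 0.
    by exists 1; split; [apply: inj; rewrite realC_norm normr1 | rewrite mulr1 realC_norm normr0].
  have na0 : `|a| != 0 by rewrite normr_eq0.
  exists (a / `|a|); split.
    by apply: inj; rewrite realC_norm normrM normfV normr_id divff.
  by rewrite realC_norm mulrCA divff // mulr1.
Qed.
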